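(* Let $i\in\{1,2,3\}$ and let $v:(t_0,t_1)\times\mathbb T^3\to\mathbb R^3$, together with $L$, be a (sufficiently regular) solution of the system \[ \begin{aligned} \partial_t v^i&=-\frac{\alpha(1-3K)}{t}v^i - \frac{K}{1+K}t^{-\alpha}(1-|v|^2)\partial_i L-t^{-\alpha}v^j\partial_j v^i +t^{-\alpha}\Big(1-\frac{1-K}{1-K|v|^2}\Big)v^i\partial_j v^j\\ &\quad+t^{-\alpha}\frac{1-K}{1+K}\Big(1-\frac{1-K}{1-K|v|^2}\Big)v^i v^j\partial_j L +\frac{\alpha(1-3K)}{t}\frac{1-K}{1-K|v|^2}|v|^2 v^i,\\ \partial_tL&=-t^{-\alpha}\frac{1+K}{1-K|v|^2}\partial_j v^j-t^{-\alpha}\frac{1-K}{1-K|v|^2} v^j\partial_j L+\frac{\alpha(1+K)}{t}\frac{1-3K}{1-K|v|^2}|v|^2 . \end{aligned} \] Then the mean velocity $\overline v^i(t)=\int_{\mathbb T^3}v^i(t,x)\,d^3x$ satisfies \[ \partial_t\overline v^i=-\frac{\alpha(1-3K)}{t}\overline v^i+g^i(t), \] where \[ |g(t)|\leq C\frac{1+t^{1-\alpha}}{t}\, p\big(\overline v^j,\|D v\|_{H^1},\|D v\|_{L^{\infty}},\|D L\|_{L^2}\big) \] for a constant $C$ and a polynomial $p$ all of whose terms have degree at least two (i.e.\ vanishing zeroth and first order parts).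
   Context: Standing assumptions: $\alpha>0$ and $0\le K\le 1/3$ are constants, $t>1$, and $|v|<1/10$. $\mathbb T^3$ is the standard flat 3-torus, indices are raised/lowered with $\delta$, repeated indices summed, $|v|^2=\delta_{ij}v^iv^j$. $D$ denotes the spatial gradient and $\|f\|_{H^r}^2=\sum_{n=0}^r\int_{\mathbb T^3}|D^nf|^2$. The system is the relativistic Euler equations with $p=K\rho$ on the metric $-dt^2+t^{2\alpha}\delta$ written in variables $v^i=t^\alpha u^i/\sqrt{1+t^{2\alpha}|u|^2}$, $L=\log(t^{3\alpha(1+K)}\rho)$. *)

(* Defs.v *)
From Stdlib Require Import Reals Lra List.
From Coquelicot Require Import Coquelicot.
Open Scope R_scope.

(* A scalar field on (time) x R^3 : F t x1 x2 x3.  Functions on T^3 are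
   represented as 1-periodic functions on R^3 (T^3 = R^3 / Z^3). *)
Definition fld := R -> R -> R -> R -> R.

(* partial derivative in direction k: 0 = time, 1,2,3 = space x^1,x^2,x^3 *)
Definition pd (k : nat) (F : fld) : fld := fun t x y z =>
  match k with
  | O => Derive (fun s => F s x y z) t
  | 1%nat => Derive (fun s => F t s y z) x
  | 2%nat => Derive (fun s => F t x s z) y
  | _ => Derive (fun s => F t x y s) z
  end.

Definition ex_pd (k : nat) (F : fld) (t x y z : R) : Prop :=
  match k with
  | O => ex_derive (fun s => F s x y z) t
  | 1%nat => ex_derive (fun s => F t s y z) x
  | 2%nat => ex_derive (fun s => F t x s z) y
  | _ => ex_derive (fun s => F t x y s) z
  end.

Definition pdl (ds : list nat) (F : fld) : fld := fold_right pd F ds.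

Definition cont4 (F : fld) (t x y z : R) : Prop :=
  forall eps, 0 < eps -> exists delta, 0 < delta /\
    forall t' x' y' z', Rabs (t' - t) < delta -> Rabs (x' - x) < delta ->
      Rabs (y' - y) < delta -> Rabs (z' - z) < delta ->
      Rabs (F t' x' y' z' - F t x y z) < eps.

Definition smooth_on (t0 t1 : R) (F : fld) : Prop :=
  forall (ds : list nat) (k : nat) t x y z, t0 < t < t1 ->
    cont4 (pdl ds F) t x y z /\ ex_pd k (pdl ds F) t x y z.

Definition periodic (F : fld) : Prop :=
  forall t x y z, F t (x + 1) y z = F t x y z /\ F t x (y + 1) z = F t x y z
                  /\ F t x y (z + 1) = F t x y z.

(* spatial partial derivative d_j, j = 0,1,2 *)
Definition dsp (j : nat) (F : fld) : fld := pd (S j) F.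

Definition sum3 (f : nat -> R) : R := f 0%nat + f 1%nat + f 2%nat.

Definition int3 (f : R -> R -> R -> R) : R :=
  RInt (fun x => RInt (fun y => RInt (fun z => f x y z) 0 1) 0 1) 0 1.

Definition vfld := nat -> fld.

Definition vsq (v : vfld) : fld := fun t x y z => sum3 (fun j => (v j t x y z)^2).

Definition euler_eqs (alpha K : R) (v : vfld) (L : fld) (t x y z : R) : Prop :=
  let w2 := vsq v t x y z in
  let q := (1 - K) / (1 - K * w2) in
  let ta := Rpower t (- alpha) in
  (forall i, (i < 3)%nat ->
     pd 0 (v i) t x y z =
       - (alpha * (1 - 3 * K) / t) * v i t x y z
       - K / (1 + K) * ta * (1 - w2) * dsp i L t x y z
       - ta * sum3 (fun j => v j t x y z * dsp j (v i) t x y z)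
       + ta * (1 - q) * v i t x y z * sum3 (fun j => dsp j (v j) t x y z)
       + ta * (1 - K) / (1 + K) * (1 - q) * v i t x y z
            * sum3 (fun j => v j t x y z * dsp j L t x y z)
       + alpha * (1 - 3 * K) / t * q * w2 * v i t x y z) /\
  pd 0 L t x y z =
    - ta * (1 + K) / (1 - K * w2) * sum3 (fun j => dsp j (v j) t x y z)
    - ta * q * sum3 (fun j => v j t x y z * dsp j L t x y z)
    + alpha * (1 + K) / t * (1 - 3 * K) / (1 - K * w2) * w2.

Definition vbar (v : vfld) (i : nat) (t : R) : R := int3 (fun x y z => v i t x y z).

Definition Dv_sq (v : vfld) : fld := fun t x y z =>
  sum3 (fun i => sum3 (fun j => (dsp j (v i) t x y z)^2)).
Definition D2v_sq (v : vfld) : fld := fun t x y z =>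
  sum3 (fun i => sum3 (fun j => sum3 (fun k => (dsp k (dsp j (v i)) t x y z)^2))).

Definition norm_Dv_H1 (v : vfld) (t : R) : R :=
  sqrt (int3 (fun x y z => Dv_sq v t x y z + D2v_sq v t x y z)).

Definition norm_Dv_Linf (v : vfld) (t : R) : R :=
  match Lub_Rbar (fun r : R => exists x y z : R, r = sqrt (Dv_sq v t x y z)) with
  | Finite r => r
  | _ => 0
  end.

Definition norm_DL_L2 (L : fld) (t : R) : R :=
  sqrt (int3 (fun x y z => sum3 (fun j => (dsp j L t x y z)^2))).

Definition poly6 : Type := list (R * (nat -> nat))%type.
Definition mono6 (e : nat -> nat) (X : nat -> R) : R :=
  X 0%nat ^ e 0%nat * X 1%nat ^ e 1%nat * X 2%nat ^ e 2%nat *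
  X 3%nat ^ e 3%nat * X 4%nat ^ e 4%nat * X 5%nat ^ e 5%nat.
Definition deg6 (e : nat -> nat) : nat :=
  (e 0%nat + e 1%nat + e 2%nat + e 3%nat + e 4%nat + e 5%nat)%nat.
Definition peval6 (p : poly6) (X : nat -> R) : R :=
  fold_right (fun m acc => fst m * mono6 (snd m) X + acc) 0 p.
Definition at_least_quadratic (p : poly6) : Prop :=
  List.Forall (fun m : R * (nat -> nat) => (2 <= deg6 (snd m))%nat) p.

(* Main.v *)
Require Import Defs.
From Stdlib Require Import Reals List Lra Lia Classical ZArith.
From Coquelicot Require Import Coquelicot.
Open Scope R_scope.

Lemma ballR (x e y : R) : ball x e y <-> Rabs (y - x) < e.
Proof. reflexivity. Qed.

Definition P4 := (R * (R * (R * R)))%type.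
Definition uc (F : fld) : P4 -> R := fun q => F (fst q) (fst (snd q)) (fst (snd (snd q))) (snd (snd (snd q))).

Lemma cont4_iff F t x y z : cont4 F t x y z <-> continuous (uc F) ((t,(x,(y,z))) : P4).
Proof.
split.
- intros H P [eps HP].
  destruct (H eps (cond_pos eps)) as [d [Hd Hd']].
  exists (mkposreal d Hd). intros [t' [x' [y' z']]] [B1 [B2 [B3 B4]]].
  apply HP. apply ballR. apply Hd'; apply ballR; assumption.
- intros H eps Heps.
  assert (Hl : locally (uc F (t,(x,(y,z)))) (fun r => Rabs (r - F t x y z) < eps)).
  { exists (mkposreal eps Heps). intros r Hr. apply ballR in Hr. exact Hr. }
  destruct (H _ Hl) as [d Hd].
  exists d. split. apply cond_pos. intros t' x' y' z' H1 H2 H3 H4.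
  apply (Hd (t',(x',(y',z')))). repeat split; apply ballR; assumption.
Qed.

Lemma cont4_plus F G t x y z : cont4 F t x y z -> cont4 G t x y z ->
  cont4 (fun t x y z => F t x y z + G t x y z) t x y z.
Proof. rewrite !cont4_iff. intros. apply (continuous_plus (uc F) (uc G)); auto. Qed.

Lemma cont4_mult F G t x y z : cont4 F t x y z -> cont4 G t x y z ->
  cont4 (fun t x y z => F t x y z * G t x y z) t x y z.
Proof. rewrite !cont4_iff. intros. apply (continuous_mult (uc F) (uc G)); auto. Qed.

Lemma cont4_const c t x y z : cont4 (fun _ _ _ _ => c) t x y z.
Proof. rewrite cont4_iff. apply continuous_const. Qed.

Lemma cont4_opp F t x y z : cont4 F t x y z -> cont4 (fun t x y z => - F t x y z) t x y z.
Proof. rewrite !cont4_iff. intros. apply (continuous_opp (uc F)); auto. Qed.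

Lemma cont4_comp1 (f : R -> R) F t x y z : cont4 F t x y z -> continuous f (F t x y z) ->
  cont4 (fun t x y z => f (F t x y z)) t x y z.
Proof. rewrite !cont4_iff. intros. apply (continuous_comp (uc F) f); auto. Qed.

Lemma cont4_minus F G t x y z : cont4 F t x y z -> cont4 G t x y z ->
  cont4 (fun t x y z => F t x y z - G t x y z) t x y z.
Proof. intros. apply cont4_plus; auto. apply cont4_opp; auto. Qed.

Lemma cont4_pow F n t x y z : cont4 F t x y z -> cont4 (fun t x y z => F t x y z ^ n) t x y z.
Proof. intros H. induction n; simpl. apply cont4_const. apply cont4_mult; auto. Qed.

Lemma cont4_z F t x y z : cont4 F t x y z -> continuous (fun s => F t x y s) z.
Proof.
intros H. apply continuity_pt_filterlim. intros eps Heps.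
destruct (H eps Heps) as [d [Hd Hd']]. exists d; split; auto.
intros s [_ Hs]. simpl in *. unfold R_dist in *. apply Hd'; try (rewrite Rminus_diag, Rabs_R0; auto). auto.
Qed.

Definition C4 (a0 a1 : R) (F : fld) := forall t x y z, a0 < t < a1 -> cont4 F t x y z.

Definition swyz (F : fld) : fld := fun t x y z => F t x z y.
Definition swxz (F : fld) : fld := fun t x y z => F t z y x.

Lemma C4_swyz a0 a1 F : C4 a0 a1 F -> C4 a0 a1 (swyz F).
Proof.
intros H t x y z Ht eps Heps. destruct (H t x z y Ht eps Heps) as [d [Hd Hd']].
exists d; split; auto. intros; unfold swyz; apply Hd'; auto.
Qed.

Lemma C4_swxz a0 a1 F : C4 a0 a1 F -> C4 a0 a1 (swxz F).
Proof.
intros H t x y z Ht eps Heps. destruct (H t z y x Ht eps Heps) as [d [Hd Hd']].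
exists d; split; auto. intros; unfold swxz; apply Hd'; auto.
Qed.
From Stdlib Require Import ClassicalEpsilon.

Lemma RInt_diff_le f g e : ex_RInt f 0 1 -> ex_RInt g 0 1 ->
  (forall s, 0 <= s <= 1 -> Rabs (f s - g s) <= e) ->
  Rabs (RInt f 0 1 - RInt g 0 1) <= e.
Proof.
intros Hf Hg H.
assert (E : RInt (fun s => f s - g s) 0 1 = RInt f 0 1 - RInt g 0 1).
{ exact (RInt_minus f g 0 1 Hf Hg). }
rewrite <- E.
replace e with ((1 - 0) * e) by ring.
apply abs_RInt_le_const. lra.
apply (ex_RInt_minus f g); auto.
exact H.
Qed.

Lemma unif (P : Type) (near : R -> P -> Prop) (G : P -> R -> R) (p : P) :
  (forall d1 d2 q, 0 < d1 <= d2 -> near d1 q -> near d2 q) ->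
  (forall d, 0 < d -> near d p) ->
  (forall s, 0 <= s <= 1 -> forall eps, 0 < eps -> exists d, 0 < d /\
     forall q s', near d q -> Rabs (s' - s) < d -> Rabs (G q s' - G p s) < eps) ->
  forall eps, 0 < eps -> exists d, 0 < d /\
     forall q s, near d q -> 0 <= s <= 1 -> Rabs (G q s - G p s) < eps.
Proof.
intros Hmono Hrefl Hc eps Heps.
assert (He2 : 0 < eps / 2) by lra.
assert (Hex : forall s, exists d : posreal, 0 <= s <= 1 ->
   forall q s', near d q -> Rabs (s' - s) < d -> Rabs (G q s' - G p s) < eps / 2).
{ intros s. destruct (classic (0 <= s <= 1)) as [Hs|Hs].
  - destruct (Hc s Hs (eps/2) He2) as [d [Hd Hd']].
    exists (mkposreal d Hd). intros _. exact Hd'.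
  - exists (mkposreal 1 Rlt_0_1). intros Hs'. contradiction. }
set (delta := fun s => proj1_sig (constructive_indefinite_description _ (Hex s))).
assert (Hdelta : forall s, 0 <= s <= 1 ->
   forall q s', near (delta s) q -> Rabs (s' - s) < delta s -> Rabs (G q s' - G p s) < eps / 2).
{ intros s. unfold delta. destruct (constructive_indefinite_description _ (Hex s)) as [d Hd]. exact Hd. }
destruct (compactness_value_1d 0 1 delta) as [d Hd].
exists d. split. apply cond_pos.
intros q s Hq Hs.
apply NNPP. intros Hn. apply (Hd s Hs). intros [t0 [Ht [Hst Hdt]]]. apply Hn.
assert (A1 : Rabs (G q s - G p t0) < eps / 2).
{ apply Hdelta; auto. apply (Hmono d); auto. split; auto. apply cond_pos. }
assert (A2 : Rabs (G p s - G p t0) < eps / 2).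
{ apply Hdelta; auto. apply Hrefl. apply cond_pos. }
replace (G q s - G p s) with ((G q s - G p t0) - (G p s - G p t0)) by ring.
eapply Rle_lt_trans. apply Rabs_triang. rewrite Rabs_Ropp. lra.
Qed.

Definition Zf (F : fld) : fld := fun t x y z => RInt (fun s => F t x y s) 0 1.

Lemma C4_exRInt a0 a1 F t x y : C4 a0 a1 F -> a0 < t < a1 -> ex_RInt (fun s => F t x y s) 0 1.
Proof.
intros H Ht. apply (@ex_RInt_continuous R_CompleteNormedModule). intros s _. apply cont4_z. apply H; auto.
Qed.

Lemma C4_Zf a0 a1 F : C4 a0 a1 F -> C4 a0 a1 (Zf F).
Proof.
intros H t x y z Ht eps Heps.
set (near := fun d (q : R * (R * R)) => Rabs (fst q - t) < d /\ Rabs (fst (snd q) - x) < d /\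
   Rabs (snd (snd q) - y) < d /\ a0 < fst q < a1).
destruct (unif (R * (R * R)) near (fun q s => F (fst q) (fst (snd q)) (snd (snd q)) s) (t,(x,y)))
  with (eps := eps / 2) as [d [Hd Hd']].
- intros d1 d2 [t' [x' y']] Hd12 [A [B [C D]]]. unfold near; simpl in *. repeat split; lra.
- intros d Hd. unfold near; simpl. rewrite !Rminus_diag, !Rabs_R0. repeat split; lra.
- intros s Hs e He. destruct (H t x y s Ht e He) as [d [Hd Hd']].
  exists d. split; auto. intros [t' [x' y']] s' [A [B [C D]]] Hs'. simpl in *. apply Hd'; auto.
- lra.
- exists (Rmin d (Rmin (t - a0) (a1 - t))). split.
  { apply Rmin_pos; auto. apply Rmin_pos; lra. }
  intros t' x' y' z' H1 H2 H3 H4.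
  assert (Hm1 := Rmin_l d (Rmin (t - a0) (a1 - t))).
  assert (Hm2 := Rmin_r d (Rmin (t - a0) (a1 - t))).
  assert (Hm3 := Rmin_l (t - a0) (a1 - t)).
  assert (Hm4 := Rmin_r (t - a0) (a1 - t)).
  assert (Ht' : a0 < t' < a1).
  { apply Rabs_def2 in H1. lra. }
  unfold Zf.
  apply Rle_lt_trans with (eps/2); [| lra].
  apply RInt_diff_le.
  + apply (C4_exRInt a0 a1); auto.
  + apply (C4_exRInt a0 a1); auto.
  + intros s Hs. left. apply (Hd' (t',(x',y')) s); auto.
    unfold near; simpl. repeat split; lra.
Qed.

Definition D4 (a0 a1 : R) (F : fld) := C4 a0 a1 F /\ C4 a0 a1 (pd 0 F) /\
  forall t x y z, a0 < t < a1 -> ex_pd 0 F t x y z.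

Lemma C4_ext a0 a1 F G : (forall t x y z, a0 < t < a1 -> F t x y z = G t x y z) ->
  C4 a0 a1 G -> C4 a0 a1 F.
Proof.
intros E H t x y z Ht eps Heps.
destruct (H t x y z Ht eps Heps) as [d [Hd Hd']].
exists (Rmin d (Rmin (t - a0) (a1 - t))). split.
{ apply Rmin_pos; auto. apply Rmin_pos; lra. }
intros t' x' y' z' H1 H2 H3 H4.
assert (Hm1 := Rmin_l d (Rmin (t - a0) (a1 - t))).
assert (Hm2 := Rmin_r d (Rmin (t - a0) (a1 - t))).
assert (Hm3 := Rmin_l (t - a0) (a1 - t)).
assert (Hm4 := Rmin_r (t - a0) (a1 - t)).
assert (Ht' : a0 < t' < a1). { apply Rabs_def2 in H1. lra. }
rewrite !E; auto. apply Hd'; lra.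
Qed.

Lemma pd0_Zf a0 a1 F t x y z : D4 a0 a1 F -> a0 < t < a1 ->
  is_derive (fun u => Zf F u x y z) t (Zf (pd 0 F) t x y z).
Proof.
intros [HC [HC' HE]] Ht. unfold Zf.
apply (is_derive_RInt_param (fun u s => F u x y s) 0 1 t).
- apply (locally_interval _ t a0 a1); simpl; try lra.
  intros u Hu1 Hu2 s _. apply (HE u x y s). lra.
- intros s _ eps. destruct (HC' t x y s Ht eps (cond_pos eps)) as [d [Hd Hd']].
  exists (mkposreal d Hd). intros u w Hu Hw. simpl in *.
  apply Hd'; auto; rewrite Rminus_diag, Rabs_R0; auto.
- apply (locally_interval _ t a0 a1); simpl; try lra.
  intros u Hu1 Hu2. apply (C4_exRInt a0 a1); auto.
Qed.

Lemma D4_Zf a0 a1 F : D4 a0 a1 F -> D4 a0 a1 (Zf F).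
Proof.
intros HD. pose proof HD as [HC [HC' HE]]. split; [|split].
- apply C4_Zf; auto.
- apply (C4_ext _ _ _ (Zf (pd 0 F))).
  + intros t x y z Ht. unfold pd at 1. apply is_derive_unique. apply (pd0_Zf a0 a1); auto.
  + apply C4_Zf; auto.
- intros t x y z Ht. unfold ex_pd. eexists. apply (pd0_Zf a0 a1); auto.
Qed.

Lemma D4_swyz a0 a1 F : D4 a0 a1 F -> D4 a0 a1 (swyz F).
Proof.
intros [HC [HC' HE]]. split; [|split].
- apply C4_swyz; auto.
- apply (C4_swyz _ _ (pd 0 F)); auto.
- intros t x y z Ht. apply (HE t x z y Ht).
Qed.

Lemma D4_swxz a0 a1 F : D4 a0 a1 F -> D4 a0 a1 (swxz F).
Proof.
intros [HC [HC' HE]]. split; [|split].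
- apply C4_swxz; auto.
- apply (C4_swxz _ _ (pd 0 F)); auto.
- intros t x y z Ht. apply (HE t z y x Ht).
Qed.

Definition Yf (F : fld) : fld := swyz (Zf (swyz F)).
Definition Xf (F : fld) : fld := swxz (Zf (swxz F)).

Lemma C4_Yf a0 a1 F : C4 a0 a1 F -> C4 a0 a1 (Yf F).
Proof. intros. apply C4_swyz, C4_Zf, C4_swyz; auto. Qed.
Lemma C4_Xf a0 a1 F : C4 a0 a1 F -> C4 a0 a1 (Xf F).
Proof. intros. apply C4_swxz, C4_Zf, C4_swxz; auto. Qed.
Lemma D4_Yf a0 a1 F : D4 a0 a1 F -> D4 a0 a1 (Yf F).
Proof. intros. apply D4_swyz, D4_Zf, D4_swyz; auto. Qed.
Lemma D4_Xf a0 a1 F : D4 a0 a1 F -> D4 a0 a1 (Xf F).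
Proof. intros. apply D4_swxz, D4_Zf, D4_swxz; auto. Qed.

Lemma pd0_Yf a0 a1 F t x y z : D4 a0 a1 F -> a0 < t < a1 ->
  is_derive (fun u => Yf F u x y z) t (Yf (pd 0 F) t x y z).
Proof. intros HD Ht. apply (pd0_Zf a0 a1 (swyz F) t x z y); auto. apply D4_swyz; auto. Qed.

Lemma pd0_Xf a0 a1 F t x y z : D4 a0 a1 F -> a0 < t < a1 ->
  is_derive (fun u => Xf F u x y z) t (Xf (pd 0 F) t x y z).
Proof. intros HD Ht. apply (pd0_Zf a0 a1 (swxz F) t z y x); auto. apply D4_swxz; auto. Qed.

Lemma pd0_Zf_eq a0 a1 F : D4 a0 a1 F -> forall t x y z, a0 < t < a1 ->
  pd 0 (Zf F) t x y z = Zf (pd 0 F) t x y z.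
Proof. intros. apply is_derive_unique. apply (pd0_Zf a0 a1); auto. Qed.
Lemma pd0_Yf_eq a0 a1 F : D4 a0 a1 F -> forall t x y z, a0 < t < a1 ->
  pd 0 (Yf F) t x y z = Yf (pd 0 F) t x y z.
Proof. intros. apply is_derive_unique. apply (pd0_Yf a0 a1); auto. Qed.

Lemma D4_int3 a0 a1 F t : D4 a0 a1 F -> a0 < t < a1 ->
  is_derive (fun u => int3 (F u)) t (int3 (pd 0 F t)).
Proof.
intros HD Ht.
assert (HZ := D4_Zf _ _ _ HD). assert (HY := D4_Yf _ _ _ HZ).
replace (int3 (pd 0 F t)) with (Xf (pd 0 (Yf (Zf F))) t 0 0 0).
- exact (pd0_Xf a0 a1 (Yf (Zf F)) t 0 0 0 HY Ht).
- unfold Xf at 1, swxz at 1, Zf at 1, swxz at 1. unfold int3.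
  apply RInt_ext; intros s _. rewrite (pd0_Yf_eq a0 a1); auto.
  unfold Yf at 1, swyz at 1, Zf at 1, swyz at 1.
  apply RInt_ext; intros r _. rewrite (pd0_Zf_eq a0 a1); auto.
Qed.

Section I3.
Variables (a0 a1 t : R).
Hypothesis Ht : a0 < t < a1.

Lemma ex1 F x y : C4 a0 a1 F -> ex_RInt (fun z => F t x y z) 0 1.
Proof. intros; apply (C4_exRInt a0 a1); auto. Qed.
Lemma ex2 F x : C4 a0 a1 F -> ex_RInt (fun y => RInt (fun z => F t x y z) 0 1) 0 1.
Proof. intros H. apply (C4_exRInt a0 a1 (swyz (Zf F)) t x 0); auto. apply C4_swyz, C4_Zf; auto. Qed.
Lemma ex3 F : C4 a0 a1 F -> ex_RInt (fun x => RInt (fun y => RInt (fun z => F t x y z) 0 1) 0 1) 0 1.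
Proof. intros H. apply (C4_exRInt a0 a1 (swxz (Yf (Zf F))) t 0 0); auto. apply C4_swxz, C4_Yf, C4_Zf; auto. Qed.

Lemma int3_plus F G : C4 a0 a1 F -> C4 a0 a1 G ->
  int3 (fun x y z => F t x y z + G t x y z) = int3 (F t) + int3 (G t).
Proof.
intros HF HG. unfold int3.
transitivity (RInt (fun x => RInt (fun y => RInt (fun z => F t x y z) 0 1) 0 1
                          + RInt (fun y => RInt (fun z => G t x y z) 0 1) 0 1) 0 1).
- apply RInt_ext; intros x _.
  transitivity (RInt (fun y => RInt (fun z => F t x y z) 0 1 + RInt (fun z => G t x y z) 0 1) 0 1).
  + apply RInt_ext; intros y _. exact (RInt_plus _ _ 0 1 (ex1 F x y HF) (ex1 G x y HG)).
  + exact (RInt_plus _ _ 0 1 (ex2 F x HF) (ex2 G x HG)).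
- exact (RInt_plus _ _ 0 1 (ex3 F HF) (ex3 G HG)).
Qed.

Lemma int3_scal c F : C4 a0 a1 F ->
  int3 (fun x y z => c * F t x y z) = c * int3 (F t).
Proof.
intros HF. unfold int3.
transitivity (RInt (fun x => c * RInt (fun y => RInt (fun z => F t x y z) 0 1) 0 1) 0 1).
- apply RInt_ext; intros x _.
  transitivity (RInt (fun y => c * RInt (fun z => F t x y z) 0 1) 0 1).
  + apply RInt_ext; intros y _. exact (RInt_scal _ 0 1 c (ex1 F x y HF)).
  + exact (RInt_scal _ 0 1 c (ex2 F x HF)).
- exact (RInt_scal _ 0 1 c (ex3 F HF)).
Qed.

Lemma int3_le F G : C4 a0 a1 F -> C4 a0 a1 G ->
  (forall x y z, 0 <= x <= 1 -> 0 <= y <= 1 -> 0 <= z <= 1 -> F t x y z <= G t x y z) ->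
  int3 (F t) <= int3 (G t).
Proof.
intros HF HG H. unfold int3.
apply RInt_le; try lra; try apply ex3; auto.
intros x Hx. apply RInt_le; try lra; try apply ex2; auto.
intros y Hy. apply RInt_le; try lra; try apply ex1; auto.
intros z Hz. apply H; lra.
Qed.

End I3.

Lemma int3_const c : int3 (fun _ _ _ => c) = c.
Proof.
unfold int3. rewrite !RInt_const. unfold scal; simpl; unfold mult; simpl. ring.
Qed.

Lemma int3_ext f g : (forall x y z, 0 <= x <= 1 -> 0 <= y <= 1 -> 0 <= z <= 1 -> f x y z = g x y z) ->
  int3 f = int3 g.
Proof.
intros H. unfold int3. apply RInt_ext; intros x Hx. apply RInt_ext; intros y Hy.
apply RInt_ext; intros z Hz. rewrite Rmin_left, Rmax_right in *; try lra. apply H; lra.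
Qed.

Lemma cont4_t F t x y z : cont4 F t x y z -> continuous (fun s => F s x y z) t.
Proof.
intros H. apply continuity_pt_filterlim. intros eps Heps.
destruct (H eps Heps) as [d [Hd Hd']]. exists d; split; auto.
intros s [_ Hs]. simpl in *. unfold R_dist in *. apply Hd'; try (rewrite Rminus_diag, Rabs_R0; auto). auto.
Qed.

Section DL.
Variables (t0 t1 t : R) (L : fld).
Hypothesis HL : smooth_on t0 t1 L.
Hypothesis HP : periodic L.
Hypothesis Ht : t0 < t < t1.

Let cL ds x y z : cont4 (pdl ds L) t x y z := proj1 (HL ds 0%nat t x y z Ht).
Let eL ds k x y z : ex_pd k (pdl ds L) t x y z := proj2 (HL ds k t x y z Ht).

Lemma int_dz x y : RInt (fun z => dsp 2 L t x y z) 0 1 = 0.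
Proof.
unfold dsp. simpl.
change (RInt (Derive (fun s => L t x y s)) 0 1 = 0).
rewrite RInt_Derive.
- destruct (HP t x y 0) as [_ [_ E]]. rewrite Rplus_0_l in E. rewrite E. unfold minus, plus, opp; simpl; ring.
- intros s _. exact (eL nil 3 x y s).
- intros s _. apply (cont4_z (pd 3 L) t x y s). exact (cL (3%nat :: nil) x y s).
Qed.

Definition Gy : fld := fun a b c d => L t b a d.

Lemma D4_Gy : D4 (-1) 2 Gy.
Proof.
split; [|split].
- intros a b c d _ eps Heps. destruct (cL nil b a d eps Heps) as [e [He He']].
  exists e; split; auto. intros. unfold Gy. apply He'; auto. rewrite Rminus_diag, Rabs_R0; auto.
- intros a b c d _ eps Heps. destruct (cL (2%nat :: nil) b a d eps Heps) as [e [He He']].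
  exists e; split; auto. intros. unfold Gy, pd. simpl in He'. apply He'; auto. rewrite Rminus_diag, Rabs_R0; auto.
- intros a b c d _. exact (eL nil 2 b a d).
Qed.

Lemma int_dy x : RInt (fun y => RInt (fun z => dsp 1 L t x y z) 0 1) 0 1 = 0.
Proof.
assert (HD := D4_Gy). assert (HZ := D4_Zf _ _ _ HD).
destruct HZ as [_ [HC' HE]].
transitivity (RInt (Derive (fun a => Zf Gy a x 0 0)) 0 1).
- apply RInt_ext; intros a Ha. rewrite Rmin_left, Rmax_right in Ha by lra.
  change (Derive (fun a0 => Zf Gy a0 x 0 0) a) with (pd 0 (Zf Gy) a x 0 0).
  rewrite (pd0_Zf_eq (-1) 2); auto; try lra.
- rewrite RInt_Derive.
  + unfold Zf, Gy. apply Rminus_diag_eq. apply RInt_ext; intros s _.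
    destruct (HP t x 0 s) as [_ [E _]]. rewrite Rplus_0_l in E. exact E.
  + intros a Ha. rewrite Rmin_left, Rmax_right in Ha by lra. apply (HE a x 0 0). lra.
  + intros a Ha. rewrite Rmin_left, Rmax_right in Ha by lra.
    apply (cont4_t (pd 0 (Zf Gy)) a x 0 0). apply HC'. lra.
Qed.

Definition Gx : fld := fun a b c d => L t a c d.

Lemma D4_Gx : D4 (-1) 2 Gx.
Proof.
split; [|split].
- intros a b c d _ eps Heps. destruct (cL nil a c d eps Heps) as [e [He He']].
  exists e; split; auto. intros. unfold Gx. apply He'; auto. rewrite Rminus_diag, Rabs_R0; auto.
- intros a b c d _ eps Heps. destruct (cL (1%nat :: nil) a c d eps Heps) as [e [He He']].
  exists e; split; auto. intros. unfold Gx, pd. simpl in He'. apply He'; auto. rewrite Rminus_diag, Rabs_R0; auto.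
- intros a b c d _. exact (eL nil 1 a c d).
Qed.

Lemma int_dx : int3 (dsp 0 L t) = 0.
Proof.
assert (HD := D4_Gx). assert (HZ := D4_Zf _ _ _ HD). assert (HY := D4_Yf _ _ _ HZ).
destruct HY as [_ [HC' HE]].
transitivity (RInt (Derive (fun a => Yf (Zf Gx) a 0 0 0)) 0 1).
- unfold int3. apply RInt_ext; intros a Ha. rewrite Rmin_left, Rmax_right in Ha by lra.
  change (Derive (fun a0 => Yf (Zf Gx) a0 0 0 0) a) with (pd 0 (Yf (Zf Gx)) a 0 0 0).
  rewrite (pd0_Yf_eq (-1) 2); auto; try lra.
  unfold Yf at 1, swyz at 1, Zf at 1, swyz at 1.
  apply RInt_ext; intros r _. rewrite (pd0_Zf_eq (-1) 2); auto; lra.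
- rewrite RInt_Derive.
  + unfold Yf, swyz, Zf, Gx. apply Rminus_diag_eq. apply RInt_ext; intros s _.
    apply RInt_ext; intros r _.
    destruct (HP t 0 s r) as [E _]. rewrite Rplus_0_l in E. exact E.
  + intros a Ha. rewrite Rmin_left, Rmax_right in Ha by lra. apply (HE a 0 0 0). lra.
  + intros a Ha. rewrite Rmin_left, Rmax_right in Ha by lra.
    apply (cont4_t (pd 0 (Yf (Zf Gx))) a 0 0 0). apply HC'. lra.
Qed.

Lemma int_dL j : (j < 3)%nat -> int3 (dsp j L t) = 0.
Proof.
intros Hj. destruct j as [|[|[|j]]]; try lia.
- apply int_dx.
- unfold int3. transitivity (RInt (fun x => 0) 0 1).
  + apply RInt_ext; intros x _. apply int_dy.
  + rewrite RInt_const. unfold scal; simpl; unfold mult; simpl; ring.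
- unfold int3. transitivity (RInt (fun x => 0) 0 1).
  + apply RInt_ext; intros x _. transitivity (RInt (fun y => 0) 0 1).
    * apply RInt_ext; intros y _. apply int_dz.
    * rewrite RInt_const. unfold scal; simpl; unfold mult; simpl; ring.
  + rewrite RInt_const. unfold scal; simpl; unfold mult; simpl; ring.
Qed.

End DL.

Lemma fold_bound {A : Type} (h : A -> R) (l : list A) :
  forall p, In p l -> Rabs (h p) + 1 <= fold_right (fun p acc => Rabs (h p) + 1 + acc) 0 l.
Proof.
assert (Hpos : forall l, 0 <= fold_right (fun p acc => Rabs (h p) + 1 + acc) 0 l).
{ intros l0; induction l0 as [|a0 l0 IH0]; simpl. lra. pose proof (Rabs_pos (h a0)). lra. }
induction l as [|a l IH]; simpl; intros p Hp. contradiction.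
destruct Hp as [<-|Hp]. specialize (Hpos l). lra.
specialize (IH p Hp). pose proof (Rabs_pos (h a)). lra.
Qed.

Lemma bounded_cube (F : fld) t : (forall x y z, cont4 F t x y z) ->
  exists B, forall x y z, 0 <= x <= 1 -> 0 <= y <= 1 -> 0 <= z <= 1 -> Rabs (F t x y z) <= B.
Proof.
intros HF.
set (hp := fun p : Compactness.Tn 3 R => F t (fst p) (fst (snd p)) (fst (snd (snd p)))).
assert (Hex : forall p : Compactness.Tn 3 R, exists d : posreal, forall q : Compactness.Tn 3 R,
   close_n 3 d q p -> Rabs (hp q - hp p) < 1).
{ intros [x [y [z u]]]. destruct (HF x y z 1 Rlt_0_1) as [d [Hd Hd']].
  exists (mkposreal d Hd). intros [x' [y' [z' u']]] [A [B [C _]]]. unfold hp; simpl in *.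
  apply Hd'; auto. rewrite Rminus_diag, Rabs_R0; auto. }
set (delta := fun p => proj1_sig (constructive_indefinite_description _ (Hex p))).
assert (Hdelta : forall p q, close_n 3 (delta p) q p -> Rabs (hp q - hp p) < 1).
{ intros p. unfold delta. destruct (constructive_indefinite_description _ (Hex p)) as [d Hd]. exact Hd. }
apply NNPP. intros Hn.
apply (compactness_list 3 (0,(0,(0,tt))) (1,(1,(1,tt))) delta). intros [l Hl]. apply Hn.
exists (fold_right (fun p acc => Rabs (hp p) + 1 + acc) 0 l).
assert (Hin : forall p, In p l -> Rabs (hp p) + 1 <= fold_right (fun p acc => Rabs (hp p) + 1 + acc) 0 l).
{ apply fold_bound. }
intros x y z Hx Hy Hz.
destruct (Hl (x,(y,(z,tt)))) as [p [Hp [_ Hc]]]. { simpl. repeat split; lra. }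
specialize (Hdelta p _ Hc). specialize (Hin p Hp).
change (F t x y z) with (hp (x,(y,(z,tt)))).
pose proof (Rabs_triang_inv (hp (x,(y,(z,tt)))) (hp p)). lra.
Qed.

Lemma per_nat (f : R -> R) : (forall x, f (x + 1) = f x) -> forall n x, f (x + INR n) = f x.
Proof.
intros H n. induction n; intros x. simpl. rewrite Rplus_0_r; auto.
rewrite S_INR. replace (x + (INR n + 1)) with ((x + INR n) + 1) by ring. rewrite H; auto.
Qed.

Lemma per_reduce (f : R -> R) : (forall x, f (x + 1) = f x) -> forall x, exists x', 0 <= x' <= 1 /\ f x = f x'.
Proof.
intros H x. destruct (archimed x) as [A B].
exists (x - (IZR (up x) - 1)). split. lra.
destruct (ZArith_dec.Z_le_gt_dec 1 (up x)) as [Hz|Hz].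
- assert (E : IZR (up x) - 1 = INR (Z.to_nat (up x - 1))).
  { rewrite INR_IZR_INZ, Z2Nat.id by lia. rewrite minus_IZR. reflexivity. }
  rewrite E. rewrite <- (per_nat f H (Z.to_nat (up x - 1)) (x - _)). f_equal; ring.
- assert (E : IZR (up x) - 1 = - INR (Z.to_nat (1 - up x))).
  { rewrite INR_IZR_INZ, Z2Nat.id by lia. rewrite minus_IZR. simpl. ring. }
  rewrite E. rewrite <- (per_nat f H (Z.to_nat (1 - up x)) x). f_equal; ring.
Qed.

Lemma periodic_pd j F : periodic F -> (j < 3)%nat -> periodic (dsp j F).
Proof.
intros HP Hj t x y z. destruct j as [|[|[|j]]]; try lia; unfold dsp, pd; simpl.
- split; [|split].
  + unfold Derive. f_equal. apply Lim_ext. intros h.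
    replace (x + 1 + h) with ((x + h) + 1) by ring. rewrite !(proj1 (HP _ _ _ _)). reflexivity.
  + apply Derive_ext. intros s. apply HP.
  + apply Derive_ext. intros s. apply HP.
- split; [|split].
  + apply Derive_ext. intros s. apply HP.
  + unfold Derive. f_equal. apply Lim_ext. intros h.
    replace (y + 1 + h) with ((y + h) + 1) by ring. rewrite !(proj1 (proj2 (HP _ _ _ _))). reflexivity.
  + apply Derive_ext. intros s. apply HP.
- split; [|split].
  + apply Derive_ext. intros s. apply HP.
  + apply Derive_ext. intros s. apply HP.
  + unfold Derive. f_equal. apply Lim_ext. intros h.
    replace (z + 1 + h) with ((z + h) + 1) by ring. rewrite !(proj2 (proj2 (HP _ _ _ _))). reflexivity.
Qed.

Lemma bounded_all (F : fld) t : (forall x y z, cont4 F t x y z) -> periodic F ->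
  exists B, forall x y z, Rabs (F t x y z) <= B.
Proof.
intros HF HP. destruct (bounded_cube F t HF) as [B HB]. exists B. intros x y z.
destruct (per_reduce (fun s => F t s y z) (fun s => proj1 (HP t s y z)) x) as [x' [Hx' E1]].
destruct (per_reduce (fun s => F t x' s z) (fun s => proj1 (proj2 (HP t x' s z))) y) as [y' [Hy' E2]].
destruct (per_reduce (fun s => F t x' y' s) (fun s => proj2 (proj2 (HP t x' y' s))) z) as [z' [Hz' E3]].
simpl in *. rewrite E1, E2, E3. apply HB; auto.
Qed.

Lemma lub_ge (E : R -> Prop) B r0 : (forall r, E r -> r <= B) -> E r0 ->
  forall r, E r -> r <= match Lub_Rbar E with Finite m => m | _ => 0 end.
Proof.
intros HB H0 r Hr. destruct (Lub_Rbar_correct E) as [Hub Hlub].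
assert (Hle : Rbar_le (Lub_Rbar E) (Finite B)).
{ apply Hlub. intros x Hx. simpl. apply HB; auto. }
assert (H1 := Hub r Hr). assert (H2 := Hub r0 H0).
destruct (Lub_Rbar E); simpl in *; try contradiction. auto.
Qed.

Lemma sum3_ext f g : (forall i, (i < 3)%nat -> f i = g i) -> sum3 f = sum3 g.
Proof. intros H. unfold sum3. rewrite !H; auto; lia. Qed.

Lemma cont4_sum3 (F : nat -> fld) t x y z : (forall i, (i < 3)%nat -> cont4 (F i) t x y z) ->
  cont4 (fun t x y z => sum3 (fun i => F i t x y z)) t x y z.
Proof.
intros H. unfold sum3. apply cont4_plus; [apply cont4_plus|]; apply H; lia.
Qed.

Lemma C4_sum3 a0 a1 (F : nat -> fld) : (forall i, (i < 3)%nat -> C4 a0 a1 (F i)) ->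
  C4 a0 a1 (fun t x y z => sum3 (fun i => F i t x y z)).
Proof. intros H t x y z Ht. apply cont4_sum3. intros i Hi. apply H; auto. Qed.

Lemma prod_le a b : Rabs (a * b) <= (a ^ 2 + b ^ 2) / 2.
Proof.
rewrite Rabs_mult. pose proof (Rabs_pos a). pose proof (Rabs_pos b).
rewrite <- (pow2_abs a), <- (pow2_abs b). pose proof (pow2_ge_0 (Rabs a - Rabs b)). nra.
Qed.

Lemma sum3_bound (f g : nat -> R) W N : (forall j, (j < 3)%nat -> f j ^ 2 <= W) ->
  (forall j, (j < 3)%nat -> g j ^ 2 <= N) -> Rabs (sum3 (fun j => f j * g j)) <= 3 * (W + N) / 2.
Proof.
intros Hf Hg. unfold sum3.
pose proof (prod_le (f 0%nat) (g 0%nat)). pose proof (prod_le (f 1%nat) (g 1%nat)).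
pose proof (prod_le (f 2%nat) (g 2%nat)).
pose proof (Hf 0%nat ltac:(lia)). pose proof (Hf 1%nat ltac:(lia)). pose proof (Hf 2%nat ltac:(lia)).
pose proof (Hg 0%nat ltac:(lia)). pose proof (Hg 1%nat ltac:(lia)). pose proof (Hg 2%nat ltac:(lia)).
eapply Rle_trans. apply Rabs_triang. eapply Rle_trans. apply Rplus_le_compat_r. apply Rabs_triang.
lra.
Qed.

Lemma cont4_x_pt F t x y z : cont4 F t x y z -> continuity_pt (fun s => F t s y z) x.
Proof.
intros H eps Heps. destruct (H eps Heps) as [d [Hd Hd']]. exists d; split; auto.
intros s [_ Hs]. simpl in *. unfold R_dist in *. apply Hd'; try (rewrite Rminus_diag, Rabs_R0; auto). auto.
Qed.
Lemma cont4_y_pt F t x y z : cont4 F t x y z -> continuity_pt (fun s => F t x s z) y.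
Proof.
intros H eps Heps. destruct (H eps Heps) as [d [Hd Hd']]. exists d; split; auto.
intros s [_ Hs]. simpl in *. unfold R_dist in *. apply Hd'; try (rewrite Rminus_diag, Rabs_R0; auto). auto.
Qed.
Lemma cont4_z_pt F t x y z : cont4 F t x y z -> continuity_pt (fun s => F t x y s) z.
Proof.
intros H eps Heps. destruct (H eps Heps) as [d [Hd Hd']]. exists d; split; auto.
intros s [_ Hs]. simpl in *. unfold R_dist in *. apply Hd'; try (rewrite Rminus_diag, Rabs_R0; auto). auto.
Qed.

Lemma MVT1 (f : R -> R) M a b : (forall s, ex_derive f s) -> (forall s, continuity_pt f s) ->
  (forall s, Rabs (Derive f s) <= M) -> 0 <= a <= 1 -> 0 <= b <= 1 -> Rabs (f b - f a) <= M.
Proof.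
intros Hd Hc HM Ha Hb.
destruct (MVT_gen f a b (Derive f)) as [c [_ Hc']].
- intros s _. apply Derive_correct. auto.
- intros s _. auto.
- rewrite Hc'. rewrite Rabs_mult. pose proof (HM c). pose proof (Rabs_pos (Derive f c)).
  assert (Rabs (b - a) <= 1). { apply Rabs_le. lra. }
  pose proof (Rabs_pos (b - a)). nra.
Qed.

Lemma sqrt_sum3_le (g : nat -> R) : sqrt (sum3 (fun i => g i ^ 2)) <= Rabs (g 0%nat) + Rabs (g 1%nat) + Rabs (g 2%nat).
Proof.
unfold sum3. pose proof (Rabs_pos (g 0%nat)). pose proof (Rabs_pos (g 1%nat)). pose proof (Rabs_pos (g 2%nat)).
rewrite <- (sqrt_pow2 (Rabs (g 0%nat) + Rabs (g 1%nat) + Rabs (g 2%nat))) by lra.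
apply sqrt_le_1_alt.
rewrite <- (pow2_abs (g 0%nat)), <- (pow2_abs (g 1%nat)), <- (pow2_abs (g 2%nat)). nra.
Qed.

Lemma coef_le c C X B : 0 <= c <= C -> Rabs X <= B -> Rabs (c * X) <= C * B.
Proof.
intros Hc HX. rewrite Rabs_mult, Rabs_pos_eq by lra. pose proof (Rabs_pos X).
apply Rmult_le_compat; lra.
Qed.

Lemma abs_le_sq a W : a ^ 2 <= W -> W <= 1 -> Rabs a <= 1.
Proof.
intros H1 H2. rewrite <- (pow2_abs a) in H1. pose proof (Rabs_pos a).
destruct (Rle_dec (Rabs a) 1); auto. nra.
Qed.

Definition ex_k (k : nat) : nat -> nat := fun n => if Nat.eqb n k then 2%nat else 0%nat.
Definition pp : poly6 := (2, ex_k 0) :: (2, ex_k 1) :: (2, ex_k 2) :: (55, ex_k 4) :: (1, ex_k 5) :: nil.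

Section Main.
Variables (alpha K : R).
Hypothesis Halpha : 0 < alpha.
Hypothesis HK : 0 <= K <= 1/3.
Variables (t0 t1 : R) (v : vfld) (L : fld).
Hypothesis Ht0 : 1 <= t0.
Hypothesis Hv : forall i, (i < 3)%nat -> smooth_on t0 t1 (v i) /\ periodic (v i).
Hypothesis HLs : smooth_on t0 t1 L.
Hypothesis HLp : periodic L.
Hypothesis Hsm : forall t x y z, t0 < t < t1 -> sqrt (vsq v t x y z) < 1/10.
Hypothesis Heq : forall t x y z, t0 < t < t1 -> euler_eqs alpha K v L t x y z.
Variable t : R.
Hypothesis Ht : t0 < t < t1.

Lemma Cv ds i : (i < 3)%nat -> C4 t0 t1 (pdl ds (v i)).
Proof. intros Hi t' x y z Ht'. exact (proj1 (proj1 (Hv i Hi) ds 0%nat t' x y z Ht')). Qed.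
Lemma CL ds : C4 t0 t1 (pdl ds L).
Proof. intros t' x y z Ht'. exact (proj1 (HLs ds 0%nat t' x y z Ht')). Qed.

Lemma w2_small x y z : 0 <= vsq v t x y z < 1/100.
Proof.
assert (H0 : 0 <= vsq v t x y z).
{ unfold vsq, sum3. pose proof (pow2_ge_0 (v 0%nat t x y z)). pose proof (pow2_ge_0 (v 1%nat t x y z)).
  pose proof (pow2_ge_0 (v 2%nat t x y z)). lra. }
split; auto. specialize (Hsm t x y z Ht).
destruct (Rlt_dec (vsq v t x y z) (1/100)); auto.
exfalso. assert (sqrt (1/100) <= sqrt (vsq v t x y z)) by (apply sqrt_le_1_alt; lra).
replace (1/100) with ((1/10)^2) in H by field. rewrite sqrt_pow2 in H; lra.
Qed.

Lemma vj_sq j x y z : (j < 3)%nat -> v j t x y z ^ 2 <= vsq v t x y z.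
Proof.
intros Hj. unfold vsq, sum3. pose proof (pow2_ge_0 (v 0%nat t x y z)). pose proof (pow2_ge_0 (v 1%nat t x y z)).
pose proof (pow2_ge_0 (v 2%nat t x y z)). destruct j as [|[|[|j]]]; try lia; lra.
Qed.

Lemma lj_sq j x y z : (j < 3)%nat -> dsp j L t x y z ^ 2 <= sum3 (fun j => dsp j L t x y z ^ 2).
Proof.
intros Hj. unfold sum3. pose proof (pow2_ge_0 (dsp 0 L t x y z)). pose proof (pow2_ge_0 (dsp 1 L t x y z)).
pose proof (pow2_ge_0 (dsp 2 L t x y z)). destruct j as [|[|[|j]]]; try lia; lra.
Qed.

Lemma pointwise i x y z M : (i < 3)%nat ->
  (forall j k, (j < 3)%nat -> (k < 3)%nat -> dsp k (v j) t x y z ^ 2 <= M ^ 2) ->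
  Rabs (pd 0 (v i) t x y z + alpha * (1 - 3 * K) / t * v i t x y z
        + K / (1 + K) * Rpower t (- alpha) * dsp i L t x y z)
  <= 5 * (1 + alpha) * (Rpower t (- alpha) + 1 / t) *
     (vsq v t x y z + M ^ 2 + sum3 (fun j => dsp j L t x y z ^ 2)).
Proof.
intros Hi HM.
destruct (Heq t x y z Ht) as [Hvi _]. specialize (Hvi i Hi). cbv zeta in Hvi.
set (w2 := vsq v t x y z) in *.
set (ta := Rpower t (- alpha)) in *.
set (l2 := sum3 (fun j => dsp j L t x y z ^ 2)).
set (S2 := sum3 (fun j => v j t x y z * dsp j (v i) t x y z)) in *.
set (S3 := sum3 (fun j => dsp j (v j) t x y z)) in *.
set (S4 := sum3 (fun j => v j t x y z * dsp j L t x y z)) in *.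
set (q := (1 - K) / (1 - K * w2)) in *.
set (vi := v i t x y z) in *.
set (li := dsp i L t x y z) in *.
assert (Htpos : 1 <= t) by lra.
assert (Hta : 0 < ta) by (unfold ta, Rpower; apply exp_pos).
destruct (w2_small x y z) as [Hw0 Hw1]. fold w2 in Hw0, Hw1.
assert (HKw : 0 < 1 - K * w2) by nra.
assert (Hq : 0 < q <= 1).
{ unfold q. split. apply Rdiv_lt_0_compat; lra.
  apply Rmult_le_reg_r with (1 - K * w2); auto. unfold Rdiv. rewrite Rmult_assoc, Rinv_l by lra. nra. }
assert (Hl2 : 0 <= l2).
{ unfold l2, sum3. pose proof (pow2_ge_0 (dsp 0 L t x y z)). pose proof (pow2_ge_0 (dsp 1 L t x y z)).
  pose proof (pow2_ge_0 (dsp 2 L t x y z)). lra. }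
assert (HM2 : 0 <= M ^ 2) by apply pow2_ge_0.
assert (Hvi2 : vi ^ 2 <= w2) by (apply vj_sq; auto).
assert (Hvi1 : Rabs vi <= 1) by (apply (abs_le_sq vi w2); lra).
assert (Hli : li ^ 2 <= l2) by (apply lj_sq; auto).
assert (B1 : Rabs (w2 * li) <= (w2 + l2) / 2).
{ eapply Rle_trans. apply prod_le. nra. }
assert (B2 : Rabs (- S2) <= 3 * (w2 + M ^ 2) / 2).
{ rewrite Rabs_Ropp. apply sum3_bound.
  - intros j Hj. apply vj_sq; auto.
  - intros j Hj. apply HM; auto. }
assert (B3 : Rabs (vi * S3) <= 3 * (w2 + M ^ 2) / 2).
{ replace (vi * S3) with (sum3 (fun j => vi * dsp j (v j) t x y z)) by (unfold S3, sum3; ring).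
  apply sum3_bound.
  - intros j Hj. auto.
  - intros j Hj. apply HM; auto. }
assert (B4 : Rabs (vi * S4) <= 3 * (w2 + l2) / 2).
{ replace (vi * S4) with (sum3 (fun j => (vi * v j t x y z) * dsp j L t x y z)) by (unfold S4, sum3; ring).
  apply sum3_bound.
  - intros j Hj. pose proof (vj_sq j x y z Hj). fold w2 in H.
    pose proof (pow2_ge_0 vi). pose proof (pow2_ge_0 (v j t x y z)).
    replace ((vi * v j t x y z) ^ 2) with (vi ^ 2 * v j t x y z ^ 2) by ring.
    apply Rle_trans with (w2 * w2). apply Rmult_le_compat; lra. nra.
  - intros j Hj. apply lj_sq; auto. }
assert (B5 : Rabs (w2 * vi) <= w2).
{ rewrite Rabs_mult, Rabs_pos_eq by lra. nra. }
assert (C1 : Rabs (K / (1 + K) * ta * (w2 * li)) <= ta * ((w2 + l2) / 2)).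
{ apply coef_le; auto.
  assert (K / (1 + K) <= 1). { apply Rmult_le_reg_r with (1 + K). lra. unfold Rdiv. rewrite Rmult_assoc, Rinv_l by lra. lra. }
  assert (0 <= K / (1 + K)) by (apply Rdiv_le_0_compat; lra). split; nra. }
assert (C2 : Rabs (ta * (- S2)) <= ta * (3 * (w2 + M ^ 2) / 2)).
{ apply coef_le; auto. lra. }
assert (C3 : Rabs (ta * (1 - q) * (vi * S3)) <= ta * (3 * (w2 + M ^ 2) / 2)).
{ apply coef_le; auto. split; nra. }
assert (C4' : Rabs (ta * (1 - K) / (1 + K) * (1 - q) * (vi * S4)) <= ta * (3 * (w2 + l2) / 2)).
{ apply coef_le; auto.
  assert (Hc : 0 <= (1 - K) / (1 + K) <= 1).
  { split. apply Rdiv_le_0_compat; lra.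
    apply Rmult_le_reg_r with (1 + K). lra. unfold Rdiv. rewrite Rmult_assoc, Rinv_l by lra. lra. }
  replace (ta * (1 - K) / (1 + K) * (1 - q)) with (ta * ((1 - K) / (1 + K)) * (1 - q)) by (unfold Rdiv; ring).
  split. apply Rmult_le_pos; [apply Rmult_le_pos|]; lra.
  assert (0 <= ta * ((1 - K) / (1 + K)) <= ta) by (split; nra). nra. }
assert (C5 : Rabs (alpha * (1 - 3 * K) / t * q * (w2 * vi)) <= alpha * (1 / t) * w2).
{ apply coef_le; auto.
  assert (Hit : 0 < / t) by (apply Rinv_0_lt_compat; lra).
  replace (alpha * (1 - 3 * K) / t * q) with (alpha * (1 - 3 * K) * q * / t) by (unfold Rdiv; ring).
  replace (alpha * (1 / t)) with (alpha * / t) by (unfold Rdiv; ring).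
  split.
  - apply Rmult_le_pos; [|lra]. apply Rmult_le_pos; [|lra]. nra.
  - apply Rmult_le_compat_r. lra.
    assert (0 <= alpha * (1 - 3 * K) <= alpha) by (split; nra). nra. }
assert (E : pd 0 (v i) t x y z + alpha * (1 - 3 * K) / t * vi + K / (1 + K) * ta * li =
  K / (1 + K) * ta * (w2 * li) + ta * (- S2) + ta * (1 - q) * (vi * S3)
  + ta * (1 - K) / (1 + K) * (1 - q) * (vi * S4) + alpha * (1 - 3 * K) / t * q * (w2 * vi)).
{ rewrite Hvi. ring. }
rewrite E.
assert (Hit : 0 < 1 / t) by (apply Rdiv_lt_0_compat; lra).
eapply Rle_trans. apply Rabs_triang.
eapply Rle_trans. apply Rplus_le_compat_r. apply Rabs_triang.
eapply Rle_trans. apply Rplus_le_compat_r, Rplus_le_compat_r. apply Rabs_triang.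
eapply Rle_trans. apply Rplus_le_compat_r, Rplus_le_compat_r, Rplus_le_compat_r. apply Rabs_triang.
assert (0 <= ta * (5*alpha*w2 + (2+5*alpha)*M^2 + (3+5*alpha)*l2)).
{ apply Rmult_le_pos. lra. assert (0 <= alpha * w2) by nra. assert (0 <= alpha * M^2) by nra.
  assert (0 <= alpha * l2) by nra. lra. }
assert (0 <= (1/t) * ((5+4*alpha)*w2 + 5*(1+alpha)*(M^2+l2))).
{ apply Rmult_le_pos. lra. assert (0 <= alpha * w2) by nra. assert (0 <= alpha * M^2) by nra.
  assert (0 <= alpha * l2) by nra. lra. }
lra.
Qed.

Lemma D4v i : (i < 3)%nat -> D4 t0 t1 (v i).
Proof.
intros Hi. split; [|split].
- exact (Cv nil i Hi).
- exact (Cv (0%nat :: nil) i Hi).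
- intros t' x y z Ht'. exact (proj2 (proj1 (Hv i Hi) nil 0%nat t' x y z Ht')).
Qed.

Lemma deriv_vbar i : (i < 3)%nat -> is_derive (vbar v i) t (int3 (pd 0 (v i) t)).
Proof. intros Hi. exact (D4_int3 t0 t1 (v i) t (D4v i Hi) Ht). Qed.

Lemma sq_le_Dv i j x y z : (i < 3)%nat -> (j < 3)%nat -> dsp j (v i) t x y z ^ 2 <= Dv_sq v t x y z.
Proof.
intros Hi Hj. unfold Dv_sq, sum3.
pose proof (pow2_ge_0 (dsp 0 (v 0%nat) t x y z)). pose proof (pow2_ge_0 (dsp 1 (v 0%nat) t x y z)).
pose proof (pow2_ge_0 (dsp 2 (v 0%nat) t x y z)). pose proof (pow2_ge_0 (dsp 0 (v 1%nat) t x y z)).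
pose proof (pow2_ge_0 (dsp 1 (v 1%nat) t x y z)). pose proof (pow2_ge_0 (dsp 2 (v 1%nat) t x y z)).
pose proof (pow2_ge_0 (dsp 0 (v 2%nat) t x y z)). pose proof (pow2_ge_0 (dsp 1 (v 2%nat) t x y z)).
pose proof (pow2_ge_0 (dsp 2 (v 2%nat) t x y z)).
destruct i as [|[|[|i]]]; try lia; destruct j as [|[|[|j]]]; try lia; lra.
Qed.

Lemma dv_le_M i j x y z : (i < 3)%nat -> (j < 3)%nat -> Rabs (dsp j (v i) t x y z) <= norm_Dv_Linf v t.
Proof.
intros Hi Hj.
assert (Hc : forall x y z, cont4 (Dv_sq v) t x y z).
{ intros x' y' z'. unfold Dv_sq.
  apply (cont4_sum3 (fun i t x y z => sum3 (fun j => dsp j (v i) t x y z ^ 2))). intros i' Hi'.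
  apply (cont4_sum3 (fun j t x y z => dsp j (v i') t x y z ^ 2)). intros j' Hj'.
  apply (cont4_pow (dsp j' (v i'))). exact (Cv (S j' :: nil) i' Hi' t x' y' z' Ht). }
assert (Hp : periodic (Dv_sq v)).
{ intros t' x' y' z'. unfold Dv_sq.
  split; [|split]; apply sum3_ext; intros i' Hi'; apply sum3_ext; intros j' Hj';
  destruct (periodic_pd j' (v i') (proj2 (Hv i' Hi')) Hj' t' x' y' z') as [A [B C]].
  rewrite A; reflexivity. rewrite B; reflexivity. rewrite C; reflexivity. }
destruct (bounded_all (Dv_sq v) t Hc Hp) as [B HB].
assert (Hsq : Rabs (dsp j (v i) t x y z) <= sqrt (Dv_sq v t x y z)).
{ rewrite <- (sqrt_pow2 (Rabs (dsp j (v i) t x y z))) by apply Rabs_pos.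
  apply sqrt_le_1_alt. rewrite pow2_abs. apply sq_le_Dv; auto. }
eapply Rle_trans; [exact Hsq|]. unfold norm_Dv_Linf.
apply (lub_ge _ (sqrt B) (sqrt (Dv_sq v t 0 0 0))).
- intros r [x' [y' [z' ->]]]. apply sqrt_le_1_alt. specialize (HB x' y' z').
  apply Rle_trans with (Rabs (Dv_sq v t x' y' z')); [apply RRle_abs|auto].
- exists 0, 0, 0. reflexivity.
- exists x, y, z. reflexivity.
Qed.

Lemma dev_bound i x y z : (i < 3)%nat -> 0 <= x <= 1 -> 0 <= y <= 1 -> 0 <= z <= 1 ->
  Rabs (v i t x y z - vbar v i t) <= 3 * norm_Dv_Linf v t.
Proof.
intros Hi Hx Hy Hz. set (M := norm_Dv_Linf v t).
assert (Hs := proj1 (Hv i Hi)).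
assert (Hm : forall x' y' z', 0 <= x' <= 1 -> 0 <= y' <= 1 -> 0 <= z' <= 1 ->
   Rabs (v i t x' y' z' - v i t x y z) <= 3 * M).
{ intros x' y' z' Hx' Hy' Hz'.
  assert (A1 : Rabs (v i t x' y z - v i t x y z) <= M).
  { apply (MVT1 (fun s => v i t s y z)); auto.
    - intros s. exact (proj2 (Hs nil 1%nat t s y z Ht)).
    - intros s. apply cont4_x_pt. exact (Cv nil i Hi t s y z Ht).
    - intros s. exact (dv_le_M i 0 s y z Hi ltac:(lia)). }
  assert (A2 : Rabs (v i t x' y' z - v i t x' y z) <= M).
  { apply (MVT1 (fun s => v i t x' s z)); auto.
    - intros s. exact (proj2 (Hs nil 2%nat t x' s z Ht)).
    - intros s. apply cont4_y_pt. exact (Cv nil i Hi t x' s z Ht).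
    - intros s. exact (dv_le_M i 1 x' s z Hi ltac:(lia)). }
  assert (A3 : Rabs (v i t x' y' z' - v i t x' y' z) <= M).
  { apply (MVT1 (fun s => v i t x' y' s)); auto.
    - intros s. exact (proj2 (Hs nil 3%nat t x' y' s Ht)).
    - intros s. apply cont4_z_pt. exact (Cv nil i Hi t x' y' s Ht).
    - intros s. exact (dv_le_M i 2 x' y' s Hi ltac:(lia)). }
  replace (v i t x' y' z' - v i t x y z) with
    ((v i t x' y' z' - v i t x' y' z) + (v i t x' y' z - v i t x' y z) + (v i t x' y z - v i t x y z)) by ring.
  eapply Rle_trans. apply Rabs_triang. eapply Rle_trans. apply Rplus_le_compat_r. apply Rabs_triang. lra. }
assert (Cc : forall c, C4 t0 t1 (fun _ _ _ _ => c)). { intros c t' x' y' z' _. apply cont4_const. }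
assert (U : vbar v i t <= v i t x y z + 3 * M).
{ unfold vbar. rewrite <- (int3_const (v i t x y z + 3 * M)).
  apply (int3_le t0 t1 t Ht (v i) (fun _ _ _ _ => v i t x y z + 3 * M)); auto.
  apply (Cv nil i Hi).
  intros x' y' z' Hx' Hy' Hz'. specialize (Hm x' y' z' Hx' Hy' Hz'). apply Rabs_le_between in Hm. lra. }
assert (D : v i t x y z - 3 * M <= vbar v i t).
{ unfold vbar. rewrite <- (int3_const (v i t x y z - 3 * M)).
  apply (int3_le t0 t1 t Ht (fun _ _ _ _ => v i t x y z - 3 * M) (v i)); auto.
  apply (Cv nil i Hi).
  intros x' y' z' Hx' Hy' Hz'. specialize (Hm x' y' z' Hx' Hy' Hz'). apply Rabs_le_between in Hm. lra. }
apply Rabs_le. lra.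
Qed.
Lemma C4_scal c F : C4 t0 t1 F -> C4 t0 t1 (fun t x y z => c * F t x y z).
Proof. intros H t' x y z Ht'. apply cont4_mult. apply cont4_const. apply H; auto. Qed.
Lemma C4_plus F G : C4 t0 t1 F -> C4 t0 t1 G -> C4 t0 t1 (fun t x y z => F t x y z + G t x y z).
Proof. intros H1 H2 t' x y z Ht'. apply cont4_plus; auto. Qed.

Definition Qv := 2 * (vbar v 0 t ^ 2 + vbar v 1 t ^ 2 + vbar v 2 t ^ 2) + 54 * norm_Dv_Linf v t ^ 2.

Lemma w2_le_Q x y z : 0 <= x <= 1 -> 0 <= y <= 1 -> 0 <= z <= 1 -> vsq v t x y z <= Qv.
Proof.
intros Hx Hy Hz. unfold Qv, vsq, sum3. set (M := norm_Dv_Linf v t).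
assert (H : forall i, (i < 3)%nat -> v i t x y z ^ 2 <= 2 * vbar v i t ^ 2 + 18 * M ^ 2).
{ intros i Hi. pose proof (dev_bound i x y z Hi Hx Hy Hz) as Hd. fold M in Hd.
  set (e := v i t x y z - vbar v i t) in Hd.
  assert (e ^ 2 <= 9 * M ^ 2). { rewrite <- (pow2_abs e). pose proof (Rabs_pos e). nra. }
  replace (v i t x y z) with (vbar v i t + e) by (unfold e; ring).
  pose proof (pow2_ge_0 (vbar v i t - e)). nra. }
pose proof (H 0%nat ltac:(lia)). pose proof (H 1%nat ltac:(lia)). pose proof (H 2%nat ltac:(lia)). lra.
Qed.

Lemma g_bound i : (i < 3)%nat ->
  Rabs (int3 (pd 0 (v i) t) + alpha * (1 - 3 * K) / t * vbar v i t) <=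
  5 * (1 + alpha) * (Rpower t (- alpha) + 1 / t) *
  (Qv + norm_Dv_Linf v t ^ 2 + norm_DL_L2 L t ^ 2).
Proof.
intros Hi. set (M := norm_Dv_Linf v t). set (ta := Rpower t (- alpha)).
set (a := alpha * (1 - 3 * K) / t). set (k := K / (1 + K) * ta).
set (c := 5 * (1 + alpha) * (ta + 1 / t)).
assert (Hta : 0 < ta) by (unfold ta, Rpower; apply exp_pos).
assert (Hc : 0 <= c).
{ unfold c. assert (0 < 1 / t) by (apply Rdiv_lt_0_compat; lra). apply Rmult_le_pos; lra. }
set (F1 := (fun t' x y z => pd 0 (v i) t' x y z + a * v i t' x y z) : fld).
set (F2 := (fun t' x y z => k * dsp i L t' x y z) : fld).
set (Rf := (fun t' x y z => F1 t' x y z + F2 t' x y z) : fld).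
assert (HF1 : C4 t0 t1 F1). { apply C4_plus. exact (Cv (0%nat :: nil) i Hi). apply C4_scal. exact (Cv nil i Hi). }
assert (HF2 : C4 t0 t1 F2). { apply C4_scal. exact (CL (S i :: nil)). }
assert (HRf : C4 t0 t1 Rf). { apply C4_plus; auto. }
assert (E : int3 (Rf t) = int3 (pd 0 (v i) t) + a * vbar v i t).
{ transitivity (int3 (fun x y z => F1 t x y z) + int3 (fun x y z => F2 t x y z)).
  exact (int3_plus t0 t1 t Ht F1 F2 HF1 HF2).
  assert (E2 : int3 (fun x y z => F2 t x y z) = k * int3 (dsp i L t)).
  { exact (int3_scal t0 t1 t Ht k (dsp i L) (CL (S i :: nil))). }
  rewrite E2, (int_dL t0 t1 t L HLs HLp Ht i Hi).
  assert (E1 : int3 (fun x y z => F1 t x y z) = int3 (pd 0 (v i) t) + int3 (fun x y z => a * v i t x y z)).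
  { exact (int3_plus t0 t1 t Ht (pd 0 (v i)) (fun t' x y z => a * v i t' x y z)
       (Cv (0%nat :: nil) i Hi) (C4_scal a _ (Cv nil i Hi))). }
  rewrite E1. rewrite (int3_scal t0 t1 t Ht a (v i) (Cv nil i Hi)). change (vbar v i t) with (int3 (v i t)). ring. }
set (l2f := (fun t' x y z => sum3 (fun j => dsp j L t' x y z ^ 2)) : fld).
assert (Hl2 : C4 t0 t1 l2f).
{ apply (C4_sum3 t0 t1 (fun j t' x y z => dsp j L t' x y z ^ 2)). intros j Hj t' x y z Ht'.
  apply (cont4_pow (dsp j L)). exact (CL (S j :: nil) t' x y z Ht'). }
set (Bf := (fun t' x y z => c * ((Qv + M ^ 2) + l2f t' x y z)) : fld).
assert (Cc : forall c, C4 t0 t1 (fun _ _ _ _ => c)). { intros c' t' x' y' z' _. apply cont4_const. }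
assert (HBf : C4 t0 t1 Bf). { apply C4_scal. apply (C4_plus (fun _ _ _ _ => Qv + M ^ 2) l2f); auto. }
assert (Hint2 : 0 <= int3 (l2f t)).
{ rewrite <- (int3_const 0). apply (int3_le t0 t1 t Ht (fun _ _ _ _ => 0) l2f); auto.
  intros. unfold l2f, sum3. pose proof (pow2_ge_0 (dsp 0 L t x y z)). pose proof (pow2_ge_0 (dsp 1 L t x y z)).
  pose proof (pow2_ge_0 (dsp 2 L t x y z)). lra. }
assert (EB : int3 (Bf t) = c * ((Qv + M ^ 2) + norm_DL_L2 L t ^ 2)).
{ transitivity (c * int3 (fun x y z => (fun _ _ _ _ => Qv + M ^ 2) t x y z + l2f t x y z)).
  exact (int3_scal t0 t1 t Ht c _ (C4_plus _ _ (Cc _) Hl2)).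
  rewrite (int3_plus t0 t1 t Ht (fun _ _ _ _ => Qv + M ^ 2) l2f (Cc _) Hl2).
  rewrite int3_const. unfold norm_DL_L2. rewrite pow2_sqrt; auto. }
assert (Hpt : forall x y z, 0 <= x <= 1 -> 0 <= y <= 1 -> 0 <= z <= 1 -> Rabs (Rf t x y z) <= Bf t x y z).
{ intros x y z Hx Hy Hz.
  assert (HM : forall j k, (j < 3)%nat -> (k < 3)%nat -> dsp k (v j) t x y z ^ 2 <= M ^ 2).
  { intros j k' Hj Hk. pose proof (dv_le_M j k' x y z Hj Hk). fold M in H.
    rewrite <- (pow2_abs (dsp k' (v j) t x y z)). pose proof (Rabs_pos (dsp k' (v j) t x y z)). nra. }
  pose proof (pointwise i x y z M Hi HM).
  pose proof (w2_le_Q x y z Hx Hy Hz).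
  unfold Rf, F1, F2, Bf, l2f, k, a. fold ta in H |- *. fold c in H |- *.
  replace (pd 0 (v i) t x y z + alpha * (1 - 3 * K) / t * v i t x y z + K / (1 + K) * ta * dsp i L t x y z)
    with (pd 0 (v i) t x y z + alpha * (1 - 3 * K) / t * v i t x y z + (K / (1 + K) * ta * dsp i L t x y z)) in H by ring.
  eapply Rle_trans. exact H. apply Rmult_le_compat_l; auto. lra. }
rewrite <- E. rewrite <- EB. apply Rabs_le. split.
- assert (int3 (fun x y z => -1 * Rf t x y z) <= int3 (Bf t)).
  { apply (int3_le t0 t1 t Ht (fun t' x y z => -1 * Rf t' x y z) Bf); auto. apply C4_scal; auto.
    intros x y z Hx Hy Hz. specialize (Hpt x y z Hx Hy Hz). apply Rabs_le_between in Hpt. lra. }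
  rewrite (int3_scal t0 t1 t Ht (-1) Rf HRf) in H. lra.
- apply (int3_le t0 t1 t Ht Rf Bf); auto.
  intros x y z Hx Hy Hz. specialize (Hpt x y z Hx Hy Hz). apply Rabs_le_between in Hpt. lra.
Qed.
Lemma main_bound : exists g : nat -> R,
  (forall i, (i < 3)%nat ->
     is_derive (vbar v i) t (- (alpha * (1 - 3 * K) / t) * vbar v i t + g i)) /\
  sqrt (sum3 (fun i => (g i)^2)) <=
    15 * (1 + alpha) * (1 + Rpower t (1 - alpha)) / t *
    peval6 pp (fun k => match k with
                       | 0%nat => vbar v 0 t
                       | 1%nat => vbar v 1 t
                       | 2%nat => vbar v 2 t
                       | 3%nat => norm_Dv_H1 v t
                       | 4%nat => norm_Dv_Linf v t
                       | _ => norm_DL_L2 L t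
                       end).
Proof.
set (g := fun i => int3 (pd 0 (v i) t) + alpha * (1 - 3 * K) / t * vbar v i t).
exists g. split.
- intros i Hi. unfold g.
  replace (- (alpha * (1 - 3 * K) / t) * vbar v i t + (int3 (pd 0 (v i) t) + alpha * (1 - 3 * K) / t * vbar v i t))
    with (int3 (pd 0 (v i) t)) by ring.
  apply deriv_vbar; auto.
- apply (Rle_trans _ _ _ (sqrt_sum3_le g)).
  pose proof (g_bound 0 ltac:(lia)). pose proof (g_bound 1 ltac:(lia)). pose proof (g_bound 2 ltac:(lia)).
  unfold g.
  set (ta := Rpower t (- alpha)) in *.
  assert (Eq : Rpower t (1 - alpha) = t * ta).
  { replace (1 - alpha) with (1 + - alpha) by ring. rewrite Rpower_plus, Rpower_1 by lra. reflexivity. }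
  set (P := Qv + norm_Dv_Linf v t ^ 2 + norm_DL_L2 L t ^ 2) in *.
  assert (Pv : peval6 pp (fun k => match k with
                       | 0%nat => vbar v 0 t
                       | 1%nat => vbar v 1 t
                       | 2%nat => vbar v 2 t
                       | 3%nat => norm_Dv_H1 v t
                       | 4%nat => norm_Dv_Linf v t
                       | _ => norm_DL_L2 L t
                       end) = P).
  { unfold P, Qv, peval6, pp, mono6. simpl. ring. }
  rewrite Pv, Eq.
  assert (E : 15 * (1 + alpha) * (1 + t * ta) / t * P = 3 * (5 * (1 + alpha) * (ta + 1 / t) * P)).
  { field. lra. }
  rewrite E. lra.
Qed.
End Main.

Theorem lemma4p1 (alpha K : R) (Halpha : 0 < alpha) (HK : 0 <= K <= 1/3) :
  exists (C : R) (p : poly6), at_least_quadratic p /\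
  forall (t0 t1 : R) (v : vfld) (L : fld),
    1 <= t0 -> t0 < t1 ->
    (forall i, (i < 3)%nat -> smooth_on t0 t1 (v i) /\ periodic (v i)) ->
    smooth_on t0 t1 L -> periodic L ->
    (forall t x y z, t0 < t < t1 -> sqrt (vsq v t x y z) < 1/10) ->
    (forall t x y z, t0 < t < t1 -> euler_eqs alpha K v L t x y z) ->
    forall t, t0 < t < t1 ->
      exists g : nat -> R,
        (forall i, (i < 3)%nat ->
           is_derive (vbar v i) t (- (alpha * (1 - 3 * K) / t) * vbar v i t + g i)) /\
        sqrt (sum3 (fun i => (g i)^2)) <=
          C * (1 + Rpower t (1 - alpha)) / t *
          peval6 p (fun k => match k with
                             | 0%nat => vbar v 0 t
                             | 1%nat => vbar v 1 t
                             | 2%nat => vbar v 2 t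
                             | 3%nat => norm_Dv_H1 v t
                             | 4%nat => norm_Dv_Linf v t
                             | _ => norm_DL_L2 L t
                             end).
Proof.
exists (15 * (1 + alpha)), pp. split.
- unfold at_least_quadratic, pp.
  repeat (apply Forall_cons; [cbv; lia|]). apply Forall_nil.
- intros t0 t1 v L Ht0 Ht01 Hv HLs HLp Hsm Heq t Ht.
  eapply main_bound; eauto.
Qed.
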